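(* Let $\mathbf X=(X_1,\dots,X_k)$, $2\le k\le n-1$, be homogeneous coordinates of proper cycles, $S$ a vector with $(S\mid S)\le0$, with $X_1,\dots,X_k,S$ linearly independent and $\Delta(\mathbf X,S)<0$. Let $y$ be a proper cycle with $y\notin\langle\mathbf x,s\rangle$ and $(Y\mid S)\neq0$. Then there exists a proper cycle $z\in\langle\mathbf x,s\rangle^\perp$ with $(Z\mid Y)=0$ if and only if $\delta(\mathbf x,y,s)\le0$.
   Context: Let $n\ge 3$. For $X=(\xi_0,\boldsymbol\xi_1,\xi_2,\xi_3)$ and $Y=(\eta_0,\boldsymbol\eta_1,\eta_2,\eta_3)$ in $\mathbb{R}^{n+3}=\mathbb{R}\times\mathbb{R}^n\times\mathbb{R}\times\mathbb{R}$, the Lie product is the nondegenerate symmetric bilinear form $(X\mid Y)=\xi_0\eta_2+\boldsymbol\xi_1\cdot\boldsymbol\eta_1+\xi_2\eta_0-\xi_3\eta_3$. Points of $\mathbb{P}^{n+2}$ are cycles; lowercase letters denote cycles and uppercase letters their homogeneous coordinate vectors; a cycle is proper if $(X\mid X)=0$. For a list $\mathbf X$, $\langle\mathbf X\rangle$ is its span, $\langle\mathbf x\rangle$ the projective subspace, $\langle\mathbf x\rangle^\perp$ the projectivization of $\{Y:(X_i\mid Y)=0\ \forall i\}$, and $\Delta(\mathbf X)=\det[(X_i\mid X_j)]$. The discriminant of $(\mathbf x,y,s)$ is $\delta(\mathbf x,y,s)=\Delta(\mathbf X,Y,S)/(\Delta(\mathbf X,S)\Delta(Y,S))$. (Geometrically: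 the cofamily $\langle\mathbf x,s\rangle^\perp\cap\Omega$ contains a cycle tangent to $y$.) *)

(* Defs.v *)
(* Vectors of R^{n+3} are row vectors 'rV[R]_(n.+3) over a
   real closed field R; coordinates: index 0 = xi_0, indices 1..n = bold xi_1,
   index n+1 = xi_2, index n+2 = xi_3. *)
From HB Require Import structures.
From mathcomp Require Import all_boot all_order all_algebra.
Set Implicit Arguments. Unset Strict Implicit. Unset Printing Implicit Defensive.
Import Order.TTheory GRing.Theory Num.Theory.
Local Open Scope ring_scope.

Definition lie (R : pzRingType) (n : nat) (X Y : 'rV[R]_(n.+3)) : R :=
  X 0 (inord 0) * Y 0 (inord n.+1)
  + \sum_(1 <= i < n.+1) X 0 (inord i) * Y 0 (inord i)
  + X 0 (inord n.+1) * Y 0 (inord 0)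
  - X 0 (inord n.+2) * Y 0 (inord n.+2).

Definition gram (R : comPzRingType) (n : nat) (s : seq 'rV[R]_(n.+3))
  : 'M[R]_(size s) :=
  \matrix_(i < size s, j < size s) lie (nth 0 s i) (nth 0 s j).

Definition Delta (R : comPzRingType) (n : nat) (s : seq 'rV[R]_(n.+3)) : R :=
  \det (gram s).

Definition proper_cycle (R : pzRingType) (n : nat) (X : 'rV[R]_(n.+3)) : Prop :=
  X != 0 /\ lie X X = 0.

Definition discr (R : fieldType) (n : nat) (X : seq 'rV[R]_(n.+3))
  (Y S : 'rV[R]_(n.+3)) : R :=
  Delta (X ++ [:: Y; S]) / (Delta (rcons X S) * Delta [:: Y; S]).

(* Main.v *)
Require Import Defs.
From HB Require Import structures.
From mathcomp Require Import all_boot all_order all_algebra.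
From mathcomp Require Import fingroup perm ring lra zify.
Import Order.TTheory GRing.Theory Num.Theory.
Local Open Scope ring_scope.
Set Warnings "-notation-overridden -ambiguous-paths".
Set Implicit Arguments. Unset Strict Implicit. Unset Printing Implicit Defensive.

Lemma lieDl (R : rcfType) n (u v w : 'rV[R]_(n.+3)) : lie (u + v) w = lie u w + lie v w.
Proof.
rewrite /lie !mxE.
under eq_bigr => i _ do rewrite !mxE mulrDl.
rewrite big_split /=; ring.
Qed.

Lemma lieZl (R : rcfType) n a (u w : 'rV[R]_(n.+3)) : lie (a *: u) w = a * lie u w.
Proof.
rewrite /lie !mxE.
under eq_bigr => i _ do rewrite !mxE -mulrA.
rewrite -mulr_sumr /=; ring.
Qed.

Lemma lieC (R : rcfType) n (u w : 'rV[R]_(n.+3)) : lie u w = lie w u.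
Proof.
rewrite /lie.
under eq_bigr => i _ do rewrite mulrC.
ring.
Qed.

Lemma lieDr (R : rcfType) n (u v w : 'rV[R]_(n.+3)) : lie w (u + v) = lie w u + lie w v.
Proof. by rewrite lieC lieDl !(lieC w). Qed.

Lemma lieZr (R : rcfType) n a (u w : 'rV[R]_(n.+3)) : lie w (a *: u) = a * lie w u.
Proof. by rewrite lieC lieZl lieC. Qed.

Lemma lie0l (R : rcfType) n (w : 'rV[R]_(n.+3)) : lie 0 w = 0.
Proof. by rewrite -(scale0r 0) lieZl mul0r. Qed.

Lemma lie0r (R : rcfType) n (w : 'rV[R]_(n.+3)) : lie w 0 = 0.
Proof. by rewrite lieC lie0l. Qed.

Lemma lieNl (R : rcfType) n (u w : 'rV[R]_(n.+3)) : lie (- u) w = - lie u w.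
Proof. by rewrite -scaleN1r lieZl mulN1r. Qed.

Lemma lieNr (R : rcfType) n (u w : 'rV[R]_(n.+3)) : lie w (- u) = - lie w u.
Proof. by rewrite lieC lieNl lieC. Qed.

Lemma lieBl (R : rcfType) n (u v w : 'rV[R]_(n.+3)) : lie (u - v) w = lie u w - lie v w.
Proof. by rewrite lieDl lieNl. Qed.

Lemma lieBr (R : rcfType) n (u v w : 'rV[R]_(n.+3)) : lie w (u - v) = lie w u - lie w v.
Proof. by rewrite lieDr lieNr. Qed.

Lemma lie_suml (R : rcfType) n p (F : 'I_p -> 'rV[R]_(n.+3)) w :
  lie (\sum_(i < p) F i) w = \sum_(i < p) lie (F i) w.
Proof.
apply: (big_rec2 (fun x y => lie x w = y)); first exact: lie0l.
by move=> i x y _ <-; rewrite lieDl.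
Qed.

Definition Jm (R : rcfType) n : 'M[R]_(n.+3) :=
  \matrix_(i, j) lie (delta_mx 0 i) (delta_mx 0 j).

Lemma lieE (R : rcfType) n (u w : 'rV[R]_(n.+3)) : lie u w = (u *m Jm R n *m w^T) 0 0.
Proof.
rewrite mxE.
rewrite [in LHS](row_sum_delta w) lieC lie_suml.
apply: eq_bigr => j _; rewrite lieZl !mxE mulrC; congr (_ * _).
rewrite {1}(row_sum_delta u) lieC lie_suml.
apply: eq_bigr => i _; rewrite lieZl !mxE lieC.
done.
Qed.
Lemma Jm_sym (R : rcfType) n : (Jm R n)^T = Jm R n.
Proof. by apply/matrixP => i j; rewrite !mxE lieC. Qed.

Definition rowsmx (R : rcfType) n p (s : seq 'rV[R]_(n.+3)) : 'M[R]_(p, n.+3) :=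
  \matrix_(i < p, j < n.+3) (nth 0 s i) 0 j.

Lemma row_rowsmx (R : rcfType) n p (s : seq 'rV[R]_(n.+3)) (i : 'I_p) :
  row i (rowsmx p s) = nth 0 s i.
Proof. by apply/rowP => j; rewrite !mxE. Qed.

Definition gramM (R : rcfType) n p (M : 'M[R]_(p, n.+3)) : 'M[R]_p :=
  M *m Jm R n *m M^T.

Lemma gramM_E (R : rcfType) n p (M : 'M[R]_(p, n.+3)) i j :
  gramM M i j = lie (row i M) (row j M).
Proof.
rewrite lieE /gramM !mxE.
apply: eq_bigr => l _; by rewrite -row_mul !mxE.
Qed.

Lemma gramM_sym (R : rcfType) n p (M : 'M[R]_(p, n.+3)) : (gramM M)^T = gramM M.
Proof. by rewrite /gramM !trmx_mul trmxK Jm_sym mulmxA. Qed.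

Lemma gramM_mul (R : rcfType) n p q (T : 'M[R]_(q, p)) (M : 'M[R]_(p, n.+3)) :
  gramM (T *m M) = T *m gramM M *m T^T.
Proof. by rewrite /gramM trmx_mul !mulmxA. Qed.

Lemma Delta_rows (R : rcfType) n p (s : seq 'rV[R]_(n.+3)) :
  size s = p -> Delta s = \det (gramM (rowsmx p s)).
Proof.
move=> E; subst p; rewrite /Delta; congr (\det _).
by apply/matrixP => i j; rewrite gramM_E !row_rowsmx mxE.
Qed.

Lemma orth_entry (R : rcfType) n p (M : 'M[R]_(p, n.+3)) (u : 'rV[R]_(n.+3)) i :
  (M *m Jm R n *m u^T) i 0 = lie (row i M) u.
Proof.
rewrite lieE !mxE; apply: eq_bigr => l _; by rewrite -row_mul !mxE.
Qed.

Lemma orth_mul (R : rcfType) n p q (T : 'M[R]_(q, p)) (M : 'M[R]_(p, n.+3)) (u : 'rV[R]_(n.+3)) :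
  M *m Jm R n *m u^T = 0 -> (T *m M) *m Jm R n *m u^T = 0.
Proof. by move=> H; rewrite -!mulmxA (mulmxA M) H mulmx0. Qed.

Lemma orth_lie (R : rcfType) n p (M : 'M[R]_(p, n.+3)) (u : 'rV[R]_(n.+3)) :
  M *m Jm R n *m u^T = 0 -> forall i, lie (row i M) u = 0.
Proof. by move=> H i; rewrite -orth_entry H mxE. Qed.

Lemma lie_orth (R : rcfType) n p (M : 'M[R]_(p, n.+3)) (u : 'rV[R]_(n.+3)) :
  (forall i, lie (row i M) u = 0) -> M *m Jm R n *m u^T = 0.
Proof. by move=> H; apply/matrixP => i j; rewrite ord1 orth_entry H mxE. Qed.

Lemma lie_comb (R : rcfType) n p (w : 'rV[R]_p) (M : 'M[R]_(p, n.+3)) (u : 'rV[R]_(n.+3)) :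
  M *m Jm R n *m u^T = 0 -> lie (w *m M) u = 0.
Proof. by move=> H; rewrite lieE -!mulmxA (mulmxA M) H mulmx0 mxE. Qed.

Lemma orth_seq (R : rcfType) n (s : seq 'rV[R]_(n.+3)) (u : 'rV[R]_(n.+3)) :
  rowsmx (size s) s *m Jm R n *m u^T = 0 <-> (forall W, W \in s -> lie W u = 0).
Proof.
split.
  move=> H W /(nthP 0) [i Hi <-].
  by rewrite -(orth_lie H (Ordinal Hi)) row_rowsmx.
move=> H; apply: lie_orth => i; rewrite row_rowsmx; apply: H; exact: mem_nth.
Qed.
Lemma kernel_ex (R : rcfType) p r (K : 'M[R]_(p, r)) :
  (r < p)%N -> exists w : 'rV[R]_p, w != 0 /\ w *m K = 0.
Proof.
move=> rp.
have Hk: kermx K != 0.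
  rewrite -mxrank_eq0 mxrank_ker subn_eq0 -ltnNge.
  exact: (leq_ltn_trans (rank_leq_col K) rp).
have /existsP [i Hi] : [exists i, row i (kermx K) != 0].
  apply: contraR Hk => /existsPn H; apply/eqP/row_matrixP => i.
  by rewrite row0; apply/eqP/negbNE/H.
exists (row i (kermx K)); split => //.
by rewrite -row_mul mulmx_ker row0.
Qed.
Lemma posP (R : rcfType) n (u : 'rV[R]_(n.+3)) :
  u 0 (inord n.+2) = 0 -> u 0 (inord 0) = u 0 (inord n.+1) -> lie u u <= 0 -> u = 0.
Proof.
move=> h3 h02; rewrite /lie h3 -h02.
set a := u 0 (inord 0).
set s := \sum_(1 <= i < n.+1) _.
have hs : 0 <= s by apply: sumr_ge0 => i _; rewrite -expr2 sqr_ge0.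
have ha : 0 <= a * a by rewrite -expr2 sqr_ge0.
move=> H.
have a0 : a * a = 0 by lra.
have s0 : s = 0 by lra.
have {}a0 : a = 0 by move/eqP: a0; rewrite mulf_eq0 orbb => /eqP.
apply/rowP => j; rewrite mxE.
case: j => v0 hv0.
have -> : Ordinal hv0 = inord v0 by apply/val_inj; rewrite /= inordK.
case: v0 hv0 => [|v] hv; first by rewrite -/a a0.

case: (ltnP v n) => hvn.
  have hin : v.+1 \in index_iota 1 n.+1 by rewrite mem_index_iota.
  move: s0; rewrite /s (bigD1_seq v.+1) ?iota_uniq //=.
  set r := \sum_(_ <- _ | _) _.
  have hr : 0 <= r by apply: sumr_ge0 => i _; rewrite -expr2 sqr_ge0.
  set b := u 0 (inord v.+1).
  have hb : 0 <= b * b by rewrite -expr2 sqr_ge0.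
  move=> E; have : b * b = 0 by lra.
  by move/eqP; rewrite mulf_eq0 orbb => /eqP.
case: (ltnP v n.+1) => hvn1.
  have -> : v = n by apply/eqP; rewrite eqn_leq -ltnS hvn1 hvn.
  by rewrite -h02.
have -> : v = n.+1 by apply/eqP; rewrite eqn_leq hvn1 andbT -ltnS -ltnS.
by rewrite h3.
Qed.
Lemma three (R : rcfType) n (u1 u2 u3 : 'rV[R]_(n.+3)) :
  lie u1 u1 < 0 -> lie u2 u2 < 0 -> lie u3 u3 <= 0 -> u3 != 0 ->
  lie u1 u2 = 0 -> lie u1 u3 = 0 -> lie u2 u3 = 0 -> False.
Proof.
move=> h1 h2 h3 nz3 o12 o13 o23.
pose K : 'M[R]_(3, 2) := \matrix_(i < 3, j < 2)
  (let v := nth 0 [:: u1; u2; u3] i in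
   if (j : nat) == 0%N then v 0 (inord n.+2) else v 0 (inord 0) - v 0 (inord n.+1)).
have [w [wnz wK]] := kernel_ex K (erefl true).
have e0 : (w *m K) 0 ord0 = 0 by rewrite wK mxE.
have e1 : (w *m K) 0 ord_max = 0 by rewrite wK mxE.
move: e0 e1; rewrite !mxE !big_ord_recl !big_ord0 !mxE /=.
set a := w 0 ord0; set b := w 0 (lift ord0 ord0); set c := w 0 (lift ord0 (lift ord0 ord0)).
move=> e0 e1.
pose u := a *: u1 + b *: u2 + c *: u3.
have uE : forall j, u 0 j = a * u1 0 j + b * u2 0 j + c * u3 0 j by move=> j; rewrite !mxE.
have Luu : lie u u = a * a * lie u1 u1 + b * b * lie u2 u2 + c * c * lie u3 u3.
  rewrite /u !(lieDl, lieDr, lieZl, lieZr) (lieC u2 u1) (lieC u3 u1) (lieC u3 u2) o12 o13 o23.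
  ring.
have t1 : a * a * lie u1 u1 <= 0 by apply: mulr_ge0_le0; rewrite ?(ltW h1) ?(ltW h2) // -expr2 sqr_ge0.
have t2 : b * b * lie u2 u2 <= 0 by apply: mulr_ge0_le0; rewrite ?(ltW h1) ?(ltW h2) // -expr2 sqr_ge0.
have t3 : c * c * lie u3 u3 <= 0 by apply: mulr_ge0_le0; rewrite ?(ltW h1) ?(ltW h2) // -expr2 sqr_ge0.
have u0 : u = 0.
  apply: posP; first by rewrite uE addr0 in e0 *; lra.
    by rewrite !uE; lra.
  by rewrite Luu; lra.
have : lie u u = 0 by rewrite u0 lie0l.
rewrite Luu => L0.
have a0 : a = 0.
  have : a * a * lie u1 u1 = 0 by lra.
  by move/eqP; rewrite !mulf_eq0 orbb (negbTE (ltr0_neq0 h1)) orbF => /eqP.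
have b0 : b = 0.
  have : b * b * lie u2 u2 = 0 by lra.
  by move/eqP; rewrite !mulf_eq0 orbb (negbTE (ltr0_neq0 h2)) orbF => /eqP.
have c0 : c = 0.
  move: u0; rewrite /u a0 b0 !scale0r !add0r => /eqP; rewrite scaler_eq0 (negbTE nz3) orbF.
  by move/eqP.
move/eqP: wnz; apply; apply/rowP => j; rewrite mxE.
case: j => [[|[|[|j]]] hj] //.
- by rewrite -a0 /a; congr (w 0 _); apply: val_inj.
- by rewrite -b0 /b; congr (w 0 _); apply: val_inj.
- by rewrite -c0 /c; congr (w 0 _); apply: val_inj.
Qed.
Lemma entry3 (R : rcfType) p p' q (A : 'M[R]_(p, q)) (G : 'M[R]_q) (B : 'M[R]_(p', q)) r c :
  (A *m G *m B^T) r c = (row r A *m G *m (row c B)^T) 0 0.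
Proof. by rewrite !mxE; apply: eq_bigr => l _; rewrite -row_mul !mxE. Qed.

Lemma pivot_diag (R : rcfType) m (G : 'M[R]_m.+1) i :
  G i i != 0 -> exists T1, T1 \in unitmx /\ (T1 *m G *m T1^T) 0 0 != 0.
Proof.
move=> Gi; exists (tperm_mx 0 i); split; first exact: unitmx_perm.
by rewrite tr_tperm_mx -xrowE -xcolE /xcol /xrow !mxE tpermL.
Qed.

Lemma pivot (R : rcfType) m (G : 'M[R]_m.+1) :
  G^T = G -> G != 0 -> exists T1, T1 \in unitmx /\ (T1 *m G *m T1^T) 0 0 != 0.
Proof.
move=> sym nz.
have [/existsP [i Gi]|/existsPn diag0] := boolP [exists i, G i i != 0].
  exact: pivot_diag Gi.
have /existsP [i /existsP [j Gij]] : [exists i, exists j, G i j != 0].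
  apply: contraR nz => /existsPn H; apply/eqP/matrixP => i j; rewrite mxE.
  by move: (H i) => /existsPn /(_ j) /negbNE /eqP.
pose D := delta_mx i j : 'M[R]_m.+1.
have DD : D *m D = 0.
  rewrite /D mul_delta_mx_cond; case: eqP => // ji.
  by move: Gij (diag0 i); rewrite -ji => ->.
pose T0 := 1%:M + D.
have uT0 : T0 \in unitmx.
  have : T0 *m (1%:M - D) = 1%:M by rewrite /T0 mulmxDl !mulmxBr !mul1mx !mulmx1 DD subr0 subrK.
  by case/mulmx1_unit.
have Gji : G j i = G i j by rewrite -[in LHS]sym mxE.
have Gii : G i i = 0 by apply/eqP/negbNE/diag0.
have Gjj : G j j = 0 by apply/eqP/negbNE/diag0.
have r0 : row i T0 = delta_mx 0 i + delta_mx 0 j.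
  by rewrite /T0 rowE mulmxDr mulmx1 /D mul_delta_mx.
have : (T0 *m G *m T0^T) i i != 0.
  rewrite entry3 r0 [(_ + _)^T]linearD /= !trmx_delta mulmxDl !mulmxDr -!rowE -!colE !mxE.
  by rewrite Gii Gjj Gji add0r addr0 -mulr2n mulrn_eq0 /= Gij.
move/pivot_diag => [T1 [uT1 H]]; exists (T1 *m T0); split.
  by rewrite unitmx_mul uT1 uT0.
by rewrite trmx_mul !mulmxA in H *.
Qed.
Lemma schur_step (R : rcfType) m (G1 : 'M[R]_(1 + m)) :
  G1^T = G1 -> G1 0 0 != 0 ->
  block_mx 1%:M 0 (- ((G1 0 0)^-1 *: dlsubmx G1)) 1%:M *m G1 *m
   (block_mx 1%:M 0 (- ((G1 0 0)^-1 *: dlsubmx G1)) 1%:M)^T =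
    block_mx (ulsubmx G1) 0 0 (drsubmx G1 - (G1 0 0)^-1 *: (dlsubmx G1 *m ursubmx G1)).
Proof.
move=> sym nz.
set c := dlsubmx G1.
set T2 := block_mx _ _ _ _.
set a := ulsubmx G1; set b := ursubmx G1; set C := drsubmx G1.
have aE : a = (G1 0 0)%:M.
  rewrite [a]mx11_scalar /a !mxE; congr (_%:M); congr (G1 _ _); exact: val_inj.
have cb : c^T = b.
  move: sym; rewrite -[G1]submxK tr_block_mx => /eq_block_mx [_ h _ _].
  by rewrite -/c -/b h.
rewrite -{1}[G1]submxK -/a -/b -/c -/C.
rewrite /T2 tr_block_mx !trmx1 !trmx0 !mulmx_block.
rewrite !(mul1mx, mul0mx, mulmx1, mulmx0, addr0, add0r).
rewrite aE mul_scalar_mx mul_mx_scalar !scalerN !scalerA mulfV // !scale1r addNr.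
rewrite [(- _)^T]linearN /= [(_ *: c)^T]linearZ /= cb scalerN scalerA mulfV // scale1r addNr.
rewrite mul0mx add0r mulNmx -scalemxAl addrC.
done.
Qed.
Lemma sym_conj (R : rcfType) p q (A : 'M[R]_(p, q)) (M : 'M[R]_q) :
  M^T = M -> (A *m M *m A^T)^T = A *m M *m A^T.
Proof. by move=> sym; rewrite !trmx_mul trmxK sym mulmxA. Qed.

Lemma diag_sym (R : rcfType) m (G : 'M[R]_m) : G^T = G ->
  exists T : 'M[R]_m, T \in unitmx /\
    (forall i j, i != j -> (T *m G *m T^T) i j = 0).
Proof.
elim: m G => [|m IH] G sym.
  by exists 1%:M; split; [exact: unitmx1 | case].
have [G0|nz] := eqVneq G 0.
  by exists 1%:M; split; [exact: unitmx1 | move=> i j _; rewrite G0 mulmx0 mul0mx mxE].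
have [T1 [uT1 piv]] := pivot sym nz.
pose G1 : 'M[R]_(1 + m) := T1 *m G *m T1^T.
have sym1 : G1^T = G1 by exact: sym_conj.
have := schur_step sym1 piv.
set c := dlsubmx G1; set T2 := block_mx _ _ _ _; set C' := (_ - _ : 'M_m) => E2.
have symC : C'^T = C'.
  have := sym_conj T2 sym1.
  by rewrite E2 tr_block_mx => /eq_block_mx [_ _ _ ->].
have [T3 [uT3 D3]] := IH C' symC.
pose T4 : 'M[R]_(1 + m) := block_mx 1%:M 0 0 T3.
exists (T4 *m T2 *m T1); split.
  have dT4 : \det (T4 : 'M_(1 + m)) = \det T3 by rewrite det_lblock det1 mul1r.
  have dT2 : \det (T2 : 'M_(1 + m)) = 1 by rewrite det_lblock !det1 mul1r.
  rewrite !unitmx_mul uT1 andbT !unitmxE dT4 dT2 unitr1 andbT -unitmxE //.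
have -> : T4 *m T2 *m T1 *m G *m (T4 *m T2 *m T1)^T = T4 *m (T2 *m G1 *m T2^T) *m T4^T.
  by rewrite /G1 !trmx_mul !mulmxA.
rewrite E2 /T4 tr_block_mx !trmx1 !trmx0 !mulmx_block.
rewrite !(mul1mx, mul0mx, mulmx1, mulmx0, addr0, add0r).
move=> i0 j0.
have [i ->] : exists i : 'I_(1 + m), i0 = i by exists i0.
have [j ->] : exists j : 'I_(1 + m), j0 = j by exists j0.
rewrite -(splitK i) -(splitK j).
case: (split i) => i'; case: (split j) => j' /=.
- by rewrite !ord1 eqxx.
- by move=> _; rewrite (@block_mxEur _ 1 m 1 m) mxE.
- by move=> _; rewrite (@block_mxEdl _ 1 m 1 m) mxE.
- move=> ne; rewrite (@block_mxEdr _ 1 m 1 m); apply: D3.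
  by apply: contraNneq ne => ->.
Qed.
Lemma one_neg (R : rcfType) p (d : 'I_p -> R) :
  \prod_i d i < 0 ->
  (forall i j l, i != j -> i != l -> j != l -> d i < 0 -> d j < 0 -> d l < 0 -> False) ->
  exists j, d j < 0 /\ forall i, i != j -> 0 < d i.
Proof.
move=> hP no3.
have [/existsP [j hj]|/existsPn hn] := boolP [exists j, d j < 0]; last first.
  have : 0 <= \prod_i d i by apply: prodr_ge0 => i _; rewrite leNgt hn.
  by rewrite leNgt hP.
exists j; split => // i ij.
rewrite lt_def; apply/andP; split.
  apply/negP => /eqP di0; move: hP.
  by rewrite (bigD1 i) //= di0 mul0r ltxx.
rewrite leNgt; apply/negP => di.
have rest : 0 <= \prod_(l | (l != j) && (l != i)) d l.
  apply: prodr_ge0 => l /andP [lj li]; rewrite leNgt; apply/negP => dl.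
  by apply: (no3 j i l) => //; rewrite eq_sym.
move: hP; rewrite (bigD1 j) //= (bigD1 i) //=.
have : 0 < d j * d i by rewrite nmulr_rgt0.
move=> h1 h2.
have : 0 <= d j * (d i * \prod_(l | (l != j) && (l != i)) d l).
  by rewrite mulrA mulr_ge0 // ltW.
by rewrite leNgt h2.
Qed.
Lemma M2_eq (R : rcfType) n (X : seq 'rV[R]_(n.+3)) (S Y : 'rV[R]_(n.+3)) :
  let k := size X in
  tperm_mx (inord k) (inord k.+1) *m rowsmx k.+2 (X ++ [:: Y; S]) =
  rowsmx k.+2 (rcons (rcons X S) Y).
Proof.
move=> k; rewrite -xrowE; apply/matrixP => r c; rewrite /xrow !mxE.
rewrite !nth_rcons size_rcons nth_cat -/k.
have ek : nat_of_ord (inord k : 'I_k.+2) = k by rewrite inordK.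
have ek1 : nat_of_ord (inord k.+1 : 'I_k.+2) = k.+1 by rewrite inordK.
case: tpermP => [->|->|rk rk1].
- rewrite ek1 ek [(k.+1 < k)%N]ltnNge leqnSn ltnSn subSnn eqxx ltnn //.
- by rewrite ?ek ?ek1 !ltnn subnn eqxx.
have rk' : nat_of_ord r != k by apply/eqP => h; apply: rk; apply/val_inj; rewrite /= h ek.
have rk1' : nat_of_ord r != k.+1 by apply/eqP => h; apply: rk1; apply/val_inj; rewrite /= h ek1.
have rlt : (nat_of_ord r < k)%N.
  have := ltn_ord r; rewrite ltnS leq_eqVlt (negbTE rk1') /= ltnS leq_eqVlt (negbTE rk').
  done.
by rewrite rlt (ltn_trans rlt (ltnSn _)).
Qed.
Lemma M3_eq (R : rcfType) n (X : seq 'rV[R]_(n.+3)) (S Y : 'rV[R]_(n.+3))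
   (v : 'rV[R]_(size X).+1) :
  (1%:M - \matrix_(i < (size X).+2, j < (size X).+2)
     (if (i == ord_max) && (j != ord_max) then v 0 (inord j) else 0))
   *m rowsmx (size X).+2 (rcons (rcons X S) Y) =
  rowsmx (size X).+2 (rcons (rcons X S) (Y - v *m rowsmx (size X).+1 (rcons X S))).
Proof.
apply/matrixP => r c; rewrite mulmxBl mul1mx !mxE.
have szs : size (rcons X S) = (size X).+1 by rewrite size_rcons.
case: (eqVneq r ord_max) => [->|rm].
  rewrite big_ord_recr /= !mxE eqxx andbF mul0r addr0.
  rewrite !nth_rcons szs ltnn eqxx !mxE.
  congr (_ - _); apply: eq_bigr => j _.
  rewrite !mxE.
  have -> : (widen_ord (leqnSn (size X).+1) j != ord_max) = true.
    by apply/eqP => /(congr1 val) /= h; move: (ltn_ord j); rewrite h ltnn.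
  rewrite eqxx /= nth_rcons szs ltn_ord.
  congr (v 0 _ * _); apply: val_inj; rewrite /= inordK //.
rewrite big1 ?subr0; last by move=> j _; rewrite !mxE (negbTE rm) mul0r.
have rlt : (r < (size X).+1)%N.
  have := ltn_ord r; rewrite ltnS leq_eqVlt => /orP [/eqP h|//].
  by move: rm; rewrite -(inj_eq val_inj) /= h eqxx.
by rewrite !nth_rcons szs rlt.
Qed.
Lemma det_sq1 (R : rcfType) m (Q : 'M[R]_m) (G : 'M[R]_m) :
  \det Q ^+ 2 = 1 -> \det (Q *m G *m Q^T) = \det G.
Proof. by move=> h; rewrite !det_mulmx det_tr mulrC mulrA -expr2 h mul1r. Qed.

Lemma Delta_formula (R : rcfType) n (X : seq 'rV[R]_(n.+3)) (S Y : 'rV[R]_(n.+3))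
   (v : 'rV[R]_(size X).+1) :
  rowsmx (size X).+1 (rcons X S) *m Jm R n *m
     (Y - v *m rowsmx (size X).+1 (rcons X S))^T = 0 ->
  Delta (X ++ [:: Y; S]) = Delta (rcons X S) *
     lie (Y - v *m rowsmx (size X).+1 (rcons X S)) (Y - v *m rowsmx (size X).+1 (rcons X S)).
Proof.
set A := rowsmx _ (rcons X S); set Y' := Y - _ => hO.
have szs : size (rcons X S) = (size X).+1 by rewrite size_rcons.
rewrite (@Delta_rows _ _ (size X).+2); last by rewrite size_cat addn2.
rewrite (@Delta_rows _ _ (size X).+1 (rcons X S)) //.
set M1 := rowsmx _ _.
set Cm := \matrix_(i < (size X).+2, j < (size X).+2)
     (if (i == ord_max) && (j != ord_max) then v 0 (inord j) else 0).
set Q := (1%:M - Cm) *m tperm_mx (inord (size X)) (inord (size X).+1).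
have QM : Q *m M1 = rowsmx (size X).+2 (rcons (rcons X S) Y').
  by rewrite /Q -mulmxA M2_eq M3_eq.
have dQ : \det Q ^+ 2 = 1.
  rewrite /Q det_mulmx /tperm_mx det_perm.
  have -> : \det (1%:M - Cm) = 1.
    rewrite det_trig; last first.
      apply/is_trig_mxP => i j ij; rewrite !mxE.
      have -> : (i == j) = false by apply/negbTE; rewrite neq_ltn ij.
      have -> : (i == ord_max) = false.
        apply/negbTE; rewrite -(inj_eq val_inj) /= neq_ltn.
        by rewrite (leq_trans ij (ltnSE (ltn_ord j))).
      by rewrite subr0.
    by rewrite big1 // => i _; rewrite !mxE eqxx /= andbN subr0.
  by rewrite mul1r sqrr_sign.
rewrite -(det_sq1 _ dQ) -gramM_mul QM.
have YM : nth 0 (rcons (rcons X S) Y') (@ord_max (size X).+1) = Y'.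
  by rewrite nth_rcons szs ltnn eqxx.
rewrite (expand_det_row _ ord_max) (bigD1 ord_max) //= big1 ?addr0; last first.
  move=> j jm; rewrite gramM_E !row_rowsmx.
  have jlt : (j < (size X).+1)%N.
    have := ltn_ord j; rewrite ltnS leq_eqVlt => /orP [/eqP h|//].
    by move: jm; rewrite -(inj_eq val_inj) /= h eqxx.
  rewrite [nth _ _ j]nth_rcons szs jlt.
  have -> : nth 0 (rcons X S) j = row (inord j) A by rewrite row_rowsmx inordK.
  by rewrite YM lieC (orth_lie hO) mul0r.
rewrite gramM_E !row_rowsmx YM mulrC.
congr (_ * _); rewrite /cofactor exprD -expr2 sqrr_sign mul1r.
congr (\det _); apply/matrixP => i j; rewrite [LHS]mxE [LHS]mxE !gramM_E !row_rowsmx.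
by rewrite !lift_max /= !nth_rcons szs !ltn_ord.
Qed.
Lemma Delta2 (R : rcfType) n (u w : 'rV[R]_(n.+3)) :
  Delta [:: u; w] = lie u u * lie w w - lie u w * lie w u.
Proof.
rewrite /Delta (expand_det_row _ 0) !big_ord_recl big_ord0 addr0 /cofactor !det_mx11 !mxE /=.
rewrite /bump /= expr0 expr1; ring.
Qed.
Lemma lie_rowcomb (R : rcfType) n p (w : 'rV[R]_p) (M : 'M[R]_(p, n.+3)) v :
  lie (w *m M) v = \sum_l w 0 l * lie (row l M) v.
Proof. by rewrite mulmx_sum_row lie_suml; apply: eq_bigr => l _; rewrite lieZl. Qed.

Definition pjw (R : rcfType) n p (B : 'M[R]_(p, n.+3)) (u : 'rV[R]_(n.+3)) : 'rV[R]_p :=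
  \row_i (lie u (row i B) / lie (row i B) (row i B)).

Lemma lie_comb_row (R : rcfType) n p (B : 'M[R]_(p, n.+3)) (w : 'rV[R]_p) i :
  (forall i j, i != j -> lie (row i B) (row j B) = 0) ->
  lie (w *m B) (row i B) = w 0 i * lie (row i B) (row i B).
Proof.
move=> hB; rewrite lie_rowcomb (bigD1 i) //= big1 ?addr0 // => l li.
by rewrite hB // mulr0.
Qed.

Lemma pj_orth (R : rcfType) n p (B : 'M[R]_(p, n.+3)) u i :
  (forall i j, i != j -> lie (row i B) (row j B) = 0) ->
  (forall i, lie (row i B) (row i B) != 0) ->
  lie (row i B) (u - pjw B u *m B) = 0.
Proof.
move=> hB hnz; rewrite lieBr (lieC _ (_ *m B)) lie_comb_row // mxE.
by rewrite divfK // lieC subrr.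
Qed.

Lemma pj_norm (R : rcfType) n p (B : 'M[R]_(p, n.+3)) u :
  (forall i j, i != j -> lie (row i B) (row j B) = 0) ->
  (forall i, lie (row i B) (row i B) != 0) ->
  lie (u - pjw B u *m B) (u - pjw B u *m B) =
  lie u u - \sum_i lie u (row i B) / lie (row i B) (row i B) * lie u (row i B).
Proof.
move=> hB hnz; rewrite lieBl (lie_rowcomb _ _ (u - _)) big1; last first.
  by move=> l _; rewrite pj_orth // mulr0.
rewrite subr0 lieBr (lieC u (_ *m B)) lie_rowcomb; congr (_ - _).
by apply: eq_bigr => l _; rewrite mxE lieC.
Qed.
Lemma comb_span (R : rcfType) n p (r : 'rV[R]_p) (s : seq 'rV[R]_(n.+3)) :
  r *m rowsmx p s \in <<s>>%VS.
Proof.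
rewrite mulmx_sum_row; apply: rpred_sum => l _; apply: rpredZ.
rewrite row_rowsmx; case: (ltnP l (size s)) => hl.
  by apply: memv_span; apply: mem_nth.
by rewrite nth_default // mem0v.
Qed.

Lemma orth_tr (R : rcfType) n p (M : 'M[R]_(p, n.+3)) (u : 'rV[R]_(n.+3)) :
  u *m Jm R n *m M^T = 0 -> M *m Jm R n *m u^T = 0.
Proof.
move=> h; have := congr1 trmx h; rewrite !trmx_mul trmxK Jm_sym mulmxA trmx0 //.
Qed.

Lemma orth_seq_p (R : rcfType) n p (s : seq 'rV[R]_(n.+3)) (u : 'rV[R]_(n.+3)) :
  size s = p ->
  rowsmx p s *m Jm R n *m u^T = 0 <-> (forall W, W \in s -> lie W u = 0).
Proof. by move=> <-; apply: orth_seq. Qed.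
Lemma inord_eqE n a b : (a < n.+1)%N -> (b < n.+1)%N ->
  ((inord a : 'I_n.+1) == inord b) = (a == b).
Proof. by move=> ha hb; rewrite -(inj_eq val_inj) /= !inordK. Qed.

Definition spec (R : rcfType) n (s t : R) : 'rV[R]_(n.+3) :=
  \row_j (if j == inord 0 then s else if j == inord n.+1 then - s
          else if j == inord n.+2 then t else 0).

Lemma lie_spec (R : rcfType) n (s t : R) (w : 'rV[R]_(n.+3)) :
  lie (spec n s t) w = s * w 0 (inord n.+1) - s * w 0 (inord 0) - t * w 0 (inord n.+2).
Proof.
rewrite /lie !mxE !eqxx !inord_eqE //=.
rewrite big1_seq ?addr0; last first.
  move=> i /andP [_]; rewrite mem_index_iota => /andP [h1 h2].
  rewrite !mxE !inord_eqE ?(ltn_trans h2) //.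
  have -> : (i == 0)%N = false by case: i h1 h2.
  have -> : (i == n.+1)%N = false by apply/negbTE; rewrite neq_ltn h2.
  have -> : (i == n.+2)%N = false by apply/negbTE; rewrite neq_ltn (ltn_trans h2).
  by rewrite mul0r.
have -> : (n.+2 == n.+1) = false by rewrite eqSS; elim: (n).
ring.
Qed.

Lemma orth_lin (R : rcfType) n p (M : 'M[R]_(p, n.+3)) (u v : 'rV[R]_(n.+3)) a :
  M *m Jm R n *m u^T = 0 -> M *m Jm R n *m v^T = 0 ->
  M *m Jm R n *m (u + a *: v)^T = 0.
Proof.
move=> hu hv; apply: lie_orth => i.
by rewrite lieDr lieZr !(orth_lie hu, orth_lie hv) mulr0 addr0.
Qed.

Lemma lie_quad (R : rcfType) n (a b : 'rV[R]_(n.+3)) t :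
  lie (a + t *: b) (a + t *: b) = lie a a + 2 * t * lie a b + t ^+ 2 * lie b b.
Proof. rewrite !(lieDl, lieDr, lieZl, lieZr) (lieC b a); ring. Qed.

Lemma ltn_aux (n k : nat) : (3 <= n)%N -> (k <= n - 1)%N -> (k.+1 + (1 + 1) < n.+3)%N.
Proof. move=> *; lia. Qed.

Unset Implicit Arguments.

Theorem mainTheorem9 (R : rcfType) (n : nat) (X : seq 'rV[R]_(n.+3))
  (S Y : 'rV[R]_(n.+3)) :
  (3 <= n)%N ->
  (2 <= size X)%N -> (size X <= n - 1)%N ->
  (forall Xi, Xi \in X -> proper_cycle Xi) ->
  lie S S <= 0 ->
  free (rcons X S) ->
  Delta (rcons X S) < 0 ->
  proper_cycle Y ->
  Y \notin <<rcons X S>>%VS ->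
  lie Y S != 0 ->
  (exists Z : 'rV[R]_(n.+3),
      [/\ proper_cycle Z, (forall W, W \in rcons X S -> lie W Z = 0) & lie Z Y = 0])
  <-> discr X Y S <= 0.
Proof.
move=> hn3 hX2 hXn hXp hSS hfree hD [Ynz YY] hYnot hYS.
have szs : size (rcons X S) = (size X).+1 by rewrite size_rcons.
set A := rowsmx (size X).+1 (rcons X S).
set G := gramM A.
have hG : \det G < 0 by rewrite -(Delta_rows szs).
have [T [uT DT]] := diag_sym (gramM_sym A).
set B := T *m A.
have gB : gramM B = T *m G *m T^T by rewrite gramM_mul.
have hB : forall i j, i != j -> lie (row i B) (row j B) = 0.
  by move=> i j ij; rewrite -gramM_E gB DT.
set d := fun i => lie (row i B) (row i B).
have prodd : \prod_i d i < 0.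
  have <- : \det (gramM B) = \prod_i d i.
    rewrite det_trig; last first.
      by apply/is_trig_mxP => i j ij; rewrite gramM_E hB // neq_ltn ij.
    by apply: eq_bigr => i _; rewrite gramM_E.
  have dT : \det T != 0 by rewrite -unitfE -unitmxE.
  have hT2 : 0 < \det T ^+ 2 by rewrite lt_def sqr_ge0 expf_neq0.
  rewrite gB !det_mulmx det_tr mulrC mulrA -expr2 pmulr_rlt0 //.
have hnz : forall i, d i != 0.
  move=> i; apply/eqP => di; move: prodd.
  by rewrite (bigD1 i) //= di mul0r ltxx.
have no3 : forall i j l, i != j -> i != l -> j != l -> d i < 0 -> d j < 0 -> d l < 0 -> False.
  move=> i j l ij il jl di dj dl.
  apply: (three di dj (ltW dl)); try exact: hB.
  by apply/eqP => h; move: (hnz l); rewrite /d h lie0l eqxx.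
have [j0 [dj0 dpos]] := one_neg prodd no3.
set b0 := row j0 B.
have AB : forall u : 'rV[R]_(n.+3), A *m Jm R n *m u^T = 0 -> B *m Jm R n *m u^T = 0.
  by move=> u h; exact: (orth_mul T h).
have BA : forall u : 'rV[R]_(n.+3), B *m Jm R n *m u^T = 0 -> A *m Jm R n *m u^T = 0.
  move=> u h; have := orth_mul (invmx T) h.
  by rewrite /B mulKmx.
set wY := pjw B Y.
set Y' := Y - wY *m B.
have Y'B : B *m Jm R n *m Y'^T = 0.
  by apply: lie_orth => i; apply: pj_orth.
have Y'A := BA _ Y'B.
have Y'E : Y' = Y - (wY *m T) *m A by rewrite -mulmxA.
have DF : Delta (X ++ [:: Y; S]) = Delta (rcons X S) * lie Y' Y'.
  by rewrite Y'E; apply: Delta_formula; rewrite -Y'E.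
have D2 : Delta [:: Y; S] = - lie Y S ^+ 2.
  by rewrite Delta2 YY mul0r (lieC S Y) sub0r; ring.
have hYS2 : 0 < lie Y S ^+ 2 by rewrite lt_def sqr_ge0 expf_neq0.
have hD0 : Delta (rcons X S) != 0 by rewrite ltr0_neq0.
have discrE : discr X Y S = - lie Y' Y' / lie Y S ^+ 2.
  by rewrite /discr DF D2; field; rewrite hYS hD0.
have discr_iff : discr X Y S <= 0 <-> 0 <= lie Y' Y'.
  by rewrite discrE ler_pdivrMr // mul0r oppr_le0.
have Y'nz : Y' != 0.
  apply: contraNneq hYnot => h.
  have -> : Y = (wY *m T) *m A.
    by apply/eqP; rewrite -subr_eq0 -Y'E h.
  exact: comb_span.
have YE : Y = Y' + wY *m B by rewrite /Y' subrK.
have lb0 : lie b0 b0 < 0 by [].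
split.
  move=> [Z [[Znz ZZ] ZW ZY]].
  apply/discr_iff; rewrite leNgt; apply/negP => hq.
  have ZA : A *m Jm R n *m Z^T = 0 by apply/(orth_seq_p _ szs).
  have ZB := AB _ ZA.
  apply: (three lb0 hq (u3 := Z)) => //.
  - by rewrite ZZ.
  - exact: (orth_lie Y'B).
  - exact: (orth_lie ZB).
  - by rewrite lieBl lieC ZY (lie_comb _ ZB) subr0.
move/discr_iff => hq.
have [hq0|hq0] := eqVneq (lie Y' Y') 0.
  exists Y'; split => //.
  - by apply/(orth_seq_p _ szs).
  - by rewrite {1}YE lieDr hq0 (lieC Y') (lie_comb _ Y'B) addr0.
have hqp : 0 < lie Y' Y' by rewrite lt_def hq0 hq.
(* a vector u in the negative plane orthogonal to b0 *)
set be1 := b0 0 (inord n.+1); set be0 := b0 0 (inord 0); set be2 := b0 0 (inord n.+2).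
have [s0 [t0 [st0 ub0]]] : exists s t : R, ((s != 0) || (t != 0)) /\ lie (spec n s t) b0 = 0.
  have [h|h] := boolP ((be2 != 0) || (be1 - be0 != 0)).
    exists be2, (be1 - be0); split => //.
    by rewrite lie_spec -/be1 -/be0 -/be2; ring.
  exists 1, 0; split; first by rewrite oner_eq0.
  move: h; rewrite negb_or !negbK => /andP [/eqP h2 /eqP h10].
  by rewrite lie_spec -/be1 -/be0 -/be2; lra.
set u := spec n s0 t0.
have uu : lie u u < 0.
  rewrite lie_spec !mxE !eqxx !inord_eqE //=.
  have -> : (n.+2 == n.+1) = false by rewrite eqSS; elim: (n).
  have : 0 < s0 ^+ 2 + t0 ^+ 2.
    case/orP: st0 => h.
      by apply: ltr_pwDl; rewrite ?sqr_ge0 // lt_def sqr_ge0 expf_neq0.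
    by apply: ltr_pwDr; rewrite ?sqr_ge0 // lt_def sqr_ge0 expf_neq0.
  have : 0 <= s0 ^+ 2 by rewrite sqr_ge0.
  rewrite !expr2 mulrN => h1 h2; lra.
set c := u - pjw B u *m B.
have cB : B *m Jm R n *m c^T = 0 by apply: lie_orth => i; apply: pj_orth.
have cA := BA _ cB.
have cc : lie c c < 0.
  rewrite /c pj_norm //.
  have : 0 <= \sum_i lie u (row i B) / lie (row i B) (row i B) * lie u (row i B).
    apply: sumr_ge0 => i _; have [->|ij] := eqVneq i j0.
      by rewrite -/b0 ub0 mulr0.
    by rewrite mulrAC -expr2 divr_ge0 // ?sqr_ge0 // ltW // dpos.
  move=> h; lra.
set c' := c + (- (lie c Y' / lie Y' Y')) *: Y'.
have c'A : A *m Jm R n *m c'^T = 0 by apply: orth_lin.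
have c'B := AB _ c'A.
have c'Y : lie c' Y' = 0.
  by rewrite lieDl lieZl mulNr divfK ?subrr // lt0r_neq0.
have c'c' : lie c' c' < 0.
  have -> : lie c' c' = lie c c - lie c Y' / lie Y' Y' * lie c Y'.
    rewrite {2}/c' lieDr lieZr c'Y mulr0 addr0 /c' lieDl lieZl (lieC Y' c).
    by rewrite mulNr.
  have : 0 <= lie c Y' / lie Y' Y' * lie c Y'.
    by rewrite mulrAC -expr2 divr_ge0 // ?sqr_ge0 // ltW.
  move=> h; lra.
have hk : (((size X).+1 + (1 + 1)) < n.+3)%N by apply: ltn_aux.
have [dv [dnz dK]] := kernel_ex (Jm R n *m (col_mx A (col_mx Y' c'))^T) hk.
move: dK; rewrite mulmxA tr_col_mx tr_col_mx mul_mx_row mul_mx_row.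
move/eqP; rewrite !row_mx_eq0 => /andP [/eqP dA /andP [/eqP dY /eqP dc]].
have dA' := orth_tr dA.
have dB := AB _ dA'.
have ldY : lie dv Y' = 0 by rewrite lieE dY mxE.
have ldc : lie dv c' = 0 by rewrite lieE dc mxE.
have dd : 0 < lie dv dv.
  rewrite ltNge; apply/negP => hdd.
  apply: (three lb0 c'c' hdd dnz).
  - exact: (orth_lie c'B).
  - exact: (orth_lie dB).
  - by rewrite lieC.
set tt := Num.sqrt (lie dv dv / - lie c' c').
have htt : tt ^+ 2 = lie dv dv / - lie c' c'.
  by rewrite sqr_sqrtr // divr_ge0 // ?ltW // oppr_gt0.
exists (dv + tt *: c'); split.
- split.
    apply/eqP => Z0.
    have : lie (dv + tt *: c') c' = 0 by rewrite Z0 lie0l.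
    rewrite lieDl lieZl ldc add0r => /eqP.
    rewrite mulf_eq0 (negbTE (ltr0_neq0 c'c')) orbF => /eqP tt0.
    by move: Z0; rewrite tt0 scale0r addr0 => /eqP; rewrite (negbTE dnz).
  rewrite lie_quad ldc mulr0 addr0 htt.
  by field; exact: ltr0_neq0 c'c'.
- apply/(orth_seq_p _ szs); exact: orth_lin.
- rewrite {1}YE lieDr (lieC _ (wY *m B)) (lie_comb _ (orth_lin tt dB c'B)) addr0.
  by rewrite lieDl lieZl ldY c'Y mulr0 addr0.
Qed.
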